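(* Let $A$ be a Banach lattice algebra with identity and let $a\in A$. Then the ideal generated by $a$ (the intersection of all ideals of $A$ containing $a$) equals \[\{x\in A: |x|\le r|a|r'\ \text{for some } r,r'\in A_+\}.\]
   Context: A Banach lattice algebra is a real Banach lattice $A$ with an associative bilinear product making it a Banach algebra such that $xy\ge0$ whenever $x,y\ge0$; identity means a multiplicative identity of norm one. An ideal of $A$ is a linear subspace $I$ that is both an order ideal (if $|x|\le|y|$ and $y\in I$ then $x\in I$) and a two-sided algebraic ideal ($zx,xz\in I$ for all $z\in A$, $x\in I$). *)

(* Defs.v *)
From HB Require Import structures.
From mathcomp Require Import all_boot all_order all_algebra.
From mathcomp Require Import Rstruct.
Set Implicit Arguments. Unset Strict Implicit. Unset Printing Implicit Defensive.
Import Order.TTheory GRing.Theory Num.Theory.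
Local Open Scope ring_scope.

Notation Real := Rdefinitions.R.

Record BLAlg := {
  bla_car :> lmodType Real;
  bla_le : bla_car -> bla_car -> Prop;
  bla_sup : bla_car -> bla_car -> bla_car;
  bla_norm : bla_car -> Real;
  bla_mul : bla_car -> bla_car -> bla_car;
  bla_one : bla_car;
  bla_le_refl : forall x, bla_le x x;
  bla_le_anti : forall x y, bla_le x y -> bla_le y x -> x = y;
  bla_le_trans : forall x y z, bla_le x y -> bla_le y z -> bla_le x z;
  bla_le_add : forall x y z, bla_le x y -> bla_le (x + z) (y + z);
  bla_le_scale : forall (c : Real) x y, 0 <= c -> bla_le x y -> bla_le (c *: x) (c *: y);
  bla_sup_l : forall x y, bla_le x (bla_sup x y);
  bla_sup_r : forall x y, bla_le y (bla_sup x y);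
  bla_sup_least : forall x y z, bla_le x z -> bla_le y z -> bla_le (bla_sup x y) z;
  bla_norm_ge0 : forall x, 0 <= bla_norm x;
  bla_norm_eq0 : forall x, bla_norm x = 0 -> x = 0;
  bla_normZ : forall (c : Real) x, bla_norm (c *: x) = `|c| * bla_norm x;
  bla_normD : forall x y, bla_norm (x + y) <= bla_norm x + bla_norm y;
  bla_norm_lattice : forall x y,
    bla_le (bla_sup x (- x)) (bla_sup y (- y)) -> bla_norm x <= bla_norm y;
  bla_complete : forall u : nat -> bla_car,
    (forall eps : Real, 0 < eps -> exists N, forall m n, (N <= m)%N -> (N <= n)%N ->
        bla_norm (u m - u n) < eps) ->
    exists l, forall eps : Real, 0 < eps -> exists N, forall n, (N <= n)%N ->
        bla_norm (u n - l) < eps;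
  bla_mulA : forall x y z, bla_mul x (bla_mul y z) = bla_mul (bla_mul x y) z;
  bla_mulDl : forall x y z, bla_mul (x + y) z = bla_mul x z + bla_mul y z;
  bla_mulDr : forall x y z, bla_mul x (y + z) = bla_mul x y + bla_mul x z;
  bla_mulZl : forall (c : Real) x y, bla_mul (c *: x) y = c *: bla_mul x y;
  bla_mulZr : forall (c : Real) x y, bla_mul x (c *: y) = c *: bla_mul x y;
  bla_norm_mul : forall x y, bla_norm (bla_mul x y) <= bla_norm x * bla_norm y;
  bla_mul_ge0 : forall x y, bla_le 0 x -> bla_le 0 y -> bla_le 0 (bla_mul x y);
  bla_mul1l : forall x, bla_mul bla_one x = x;
  bla_mul1r : forall x, bla_mul x bla_one = x;
  bla_norm_one : bla_norm bla_one = 1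
}.

Section Defs.
Variable A : BLAlg.
Local Notation V := (bla_car A).

Definition babs (x : V) : V := bla_sup x (- x).

(* ideal: linear subspace, order ideal, two-sided algebraic ideal *)
Definition is_ideal (I : V -> Prop) : Prop :=
  [/\ I 0,
      (forall x y : V, I x -> I y -> I (x + y)),
      (forall (c : Real) (x : V), I x -> I (c *: x)),
      (forall x y : V, bla_le (babs x) (babs y) -> I y -> I x) &
      (forall z x : V, I x -> I (bla_mul z x) /\ I (bla_mul x z))].

Definition gen_ideal (a : V) : V -> Prop :=
  fun x => forall I, is_ideal I -> I a -> I x.
End Defs.

(* Main.v *)
Require Import Defs.
From mathcomp Require Import all_boot all_order all_algebra.
From mathcomp Require Import Rstruct.
Set Implicit Arguments. Unset Strict Implicit. Unset Printing Implicit Defensive.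
Import Order.TTheory GRing.Theory Num.Theory.
Local Open Scope ring_scope.

Lemma idA (V : zmodType) (p q r s : V) : ((p + s) - (r + q)) + ((p - s) + (r - q)) = (p - q) + (p - q).
Proof.
rewrite opprD addrACA (addrACA p s) subrr addr0 (addrACA (-r)) [-r + r]addrC subrr add0r.
by rewrite addrACA.
Qed.
Lemma idB (V : zmodType) (p q r s : V) : ((p + r) + (s + q)) + ((p - r) - (s - q)) = (p + q) + (p + q).
Proof.
rewrite opprB addrACA (addrACA p r) subrr addr0 (addrACA s q) [s + _]addrC.
by rewrite (addrACA q s) subrr addr0 addrACA.
Qed.

Section Aux.
Variable A : BLAlg.
Local Notation V := (bla_car A).
Local Notation le := (@bla_le A).
Local Notation mul := (@bla_mul A).

Lemma le_addl (x y z : V) : le x y -> le (z + x) (z + y).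
Proof. by move=> h; rewrite ![z + _]addrC; apply: bla_le_add. Qed.

Lemma le_add2 (x y z w : V) : le x y -> le z w -> le (x + z) (y + w).
Proof.
move=> h1 h2; apply: (bla_le_trans (bla_le_add z h1)); exact: le_addl.
Qed.

Lemma le_subP (x y : V) : le x y <-> le 0 (y - x).
Proof.
split=> h.
  by have := bla_le_add (- x) h; rewrite subrr.
by have := bla_le_add x h; rewrite add0r subrK.
Qed.

Lemma le_opp (x y : V) : le x y -> le (- y) (- x).
Proof.
move=> h; have := bla_le_add (- x - y) h.
by rewrite addrA subrr add0r addrCA subrr addr0.
Qed.

Lemma le_ge0_add (x y : V) : le 0 x -> le 0 y -> le 0 (x + y).
Proof. by move=> h1 h2; have := le_add2 h1 h2; rewrite addr0. Qed.

Lemma abs_ge_x (x : V) : le x (babs x).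
Proof. exact: bla_sup_l. Qed.

Lemma abs_ge_opp (x : V) : le (- x) (babs x).
Proof. exact: bla_sup_r. Qed.

Lemma abs_ge0 (x : V) : le 0 (babs x).
Proof.
have := le_add2 (abs_ge_x x) (abs_ge_opp x); rewrite subrr => h.
have := bla_le_scale (x:=0) (y := babs x + babs x) (c := 2^-1) _ h.
rewrite scaler0 -[babs x + _](scaler_nat 2) scalerA mulVf ?scale1r //.
  by move=> h'; apply: h'; rewrite invr_ge0 ler0n.
by rewrite pnatr_eq0.
Qed.

Lemma abs_le_of_ge0 (y : V) : le 0 y -> le (babs y) y.
Proof.
move=> h; apply: bla_sup_least; first exact: bla_le_refl.
apply: (bla_le_trans _ h); have := le_opp h; by rewrite oppr0.
Qed.

Lemma abs_le (x y : V) : le x y -> le (- x) y -> le (babs x) y.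
Proof. exact: bla_sup_least. Qed.

Lemma mulN_r (x y : V) : mul x (- y) = - mul x y.
Proof. by rewrite -scaleN1r bla_mulZr scaleN1r. Qed.

Lemma mulN_l (x y : V) : mul (- x) y = - mul x y.
Proof. by rewrite -scaleN1r bla_mulZl scaleN1r. Qed.

Lemma mulB_r (z x y : V) : mul z (y - x) = mul z y - mul z x.
Proof. by rewrite bla_mulDr mulN_r. Qed.

Lemma mulB_l (z x y : V) : mul (y - x) z = mul y z - mul x z.
Proof. by rewrite bla_mulDl mulN_l. Qed.

Lemma mul_le_l (z x y : V) : le 0 z -> le x y -> le (mul z x) (mul z y).
Proof.
move=> hz /le_subP h; apply/le_subP; rewrite -mulB_r; exact: bla_mul_ge0.
Qed.

Lemma mul_le_r (z x y : V) : le 0 z -> le x y -> le (mul x z) (mul y z).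
Proof.
move=> hz /le_subP h; apply/le_subP; rewrite -mulB_l; exact: bla_mul_ge0.
Qed.

Lemma half_ge0 (v : V) : le 0 (v + v) -> le 0 v.
Proof.
move=> h.
have := bla_le_scale (x:=0) (y := v + v) (c := 2^-1) _ h.
rewrite scaler0 -[v + v](scaler_nat 2) scalerA mulVf ?scale1r //.
  by move=> h'; apply: h'; rewrite invr_ge0 ler0n.
by rewrite pnatr_eq0.
Qed.

Lemma abs_mul (z x : V) : le (babs (mul z x)) (mul (babs z) (babs x)).
Proof.
have hz1 : le 0 (babs z + z).
  by have := (le_subP _ _).1 (abs_ge_opp z); rewrite opprK.
have hz2 : le 0 (babs z - z) by exact: (le_subP _ _).1 (abs_ge_x z).
have hx1 : le 0 (babs x + x).
  by have := (le_subP _ _).1 (abs_ge_opp x); rewrite opprK.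
have hx2 : le 0 (babs x - x) by exact: (le_subP _ _).1 (abs_ge_x x).
apply: abs_le.
  apply/le_subP; apply: half_ge0; rewrite -(idA _ _ (mul (babs z) x) (mul z (babs x))).
  apply: le_ge0_add.
    by have := bla_mul_ge0 hz1 hx2; rewrite mulB_r !bla_mulDl.
  by have := bla_mul_ge0 hz2 hx1; rewrite bla_mulDr !mulB_l.
apply/le_subP; rewrite opprK; apply: half_ge0; rewrite -(idB _ _ (mul (babs z) x) (mul z (babs x))).
apply: le_ge0_add.
  by have := bla_mul_ge0 hz1 hx1; rewrite bla_mulDl !bla_mulDr.
by have := bla_mul_ge0 hz2 hx2; rewrite mulB_l !mulB_r.
Qed.

Lemma abs_add (x y : V) : le (babs (x + y)) (babs x + babs y).
Proof.
apply: abs_le; first exact: le_add2 (abs_ge_x x) (abs_ge_x y).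
rewrite opprD; exact: le_add2 (abs_ge_opp x) (abs_ge_opp y).
Qed.

Lemma abs_scale (c : Real) (x : V) : le (babs (c *: x)) (`|c| *: babs x).
Proof.
have hc : 0 <= `|c| by [].
case: (lerP 0 c) => h.
  rewrite ger0_norm //; apply: abs_le; first exact: bla_le_scale (abs_ge_x x).
  rewrite -scalerN; exact: bla_le_scale (abs_ge_opp x).
rewrite ltr0_norm //; apply: abs_le.
  rewrite -[c *: x]opprK -scalerN -scaleNr; apply: bla_le_scale (abs_ge_opp x); by rewrite oppr_ge0 ltW.
rewrite -scaleNr; apply: bla_le_scale (abs_ge_x x); by rewrite oppr_ge0 ltW.
Qed.

Lemma mul0_r (x : V) : mul x 0 = 0.
Proof. by have := bla_mulZr 0 x 0; rewrite !scale0r. Qed.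
Lemma mul0_l (x : V) : mul 0 x = 0.
Proof. by have := bla_mulZl 0 0 x; rewrite !scale0r. Qed.

Lemma abs0 : babs (0 : V) = 0.
Proof.
apply: bla_le_anti; last exact: abs_ge0.
apply: abs_le_of_ge0; exact: bla_le_refl.
Qed.

End Aux.

Theorem mainTheorem9 (A : BLAlg) (a : bla_car A) :
  forall x : bla_car A, gen_ideal a x <->
    exists r r' : bla_car A, bla_le 0 r /\ bla_le 0 r' /\
      bla_le (babs x) (bla_mul (bla_mul r (babs a)) r').
Proof.
move=> x; split.
  move=> hx; apply: (hx (fun y => exists r r' : bla_car A, bla_le 0 r /\ bla_le 0 r' /\ bla_le (babs y) (bla_mul (bla_mul r (babs a)) r'))).
    split.
    - exists 0, 0; rewrite abs0 mul0_r; split; [|split]; exact: bla_le_refl.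
    - move=> u v [r1 [r1' [h1 [h1' hu]]]] [r2 [r2' [h2 [h2' hv]]]].
      exists (r1 + r2), (r1' + r2'); split; first exact: le_ge0_add.
      split; first exact: le_ge0_add.
      apply: (bla_le_trans (abs_add u v)).
      rewrite bla_mulDl !bla_mulDr !bla_mulDl.
      set p1 := bla_mul (bla_mul r1 _) r1'. set p2 := bla_mul (bla_mul r1 _) r2'.
      set p3 := bla_mul (bla_mul r2 _) r1'. set p4 := bla_mul (bla_mul r2 _) r2'.
      have hp2 : bla_le 0 p2 by apply: bla_mul_ge0 => //; apply: bla_mul_ge0 => //; apply: abs_ge0.
      have hp3 : bla_le 0 p3 by apply: bla_mul_ge0 => //; apply: bla_mul_ge0 => //; apply: abs_ge0.
      have e : p1 + p3 + (p2 + p4) = (p1 + p4) + (p2 + p3).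
        by rewrite [p2 + p4]addrC addrACA [p3 + p2]addrC.
      rewrite e; apply: (bla_le_trans (le_add2 hu hv)).
      have := le_addl (p1 + p4) (le_ge0_add hp2 hp3); by rewrite addr0.
    - move=> c u [r [r' [h [h' hu]]]].
      exists (`|c| *: r), r'; split; first by have := bla_le_scale (normr_ge0 c) h; rewrite scaler0.
      split => //; apply: (bla_le_trans (abs_scale c u)).
      rewrite !bla_mulZl; exact: bla_le_scale.
    - move=> u v huv [r [r' [h [h' hv]]]]; exists r, r'; do 2 split => //.
      exact: bla_le_trans hv.
    - move=> z u [r [r' [h [h' hu]]]]; split.
        exists (bla_mul (babs z) r), r'; split; first by apply: bla_mul_ge0 => //; apply: abs_ge0.
        split => //; apply: (bla_le_trans (abs_mul z u)).
        rewrite -!bla_mulA; rewrite -bla_mulA in hu.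
        apply: mul_le_l => //; exact: abs_ge0.
      exists r, (bla_mul r' (babs z)); split => //; split; first by apply: bla_mul_ge0 => //; apply: abs_ge0.
      apply: (bla_le_trans (abs_mul u z)); rewrite bla_mulA.
      apply: mul_le_r => //; exact: abs_ge0.
  exists (babs (bla_one A)), (babs (bla_one A)); split; first exact: abs_ge0.
  split; first exact: abs_ge0.
  have h1 : bla_le 0 (babs (bla_one A) - bla_one A) by exact: (le_subP _ _).1 (abs_ge_x _).
  have ha := abs_ge0 a.
  apply: (@bla_le_trans _ _ (bla_mul (babs a) (babs (bla_one A)))).
    apply/le_subP; rewrite -{2}[babs a](bla_mul1r) -mulB_r; exact: bla_mul_ge0.
  apply: mul_le_r; first exact: abs_ge0.
  apply/le_subP; rewrite -{2}[babs a](bla_mul1l) -mulB_l; exact: bla_mul_ge0.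
move=> [r [r' [h [h' hx]]]] I HI Ia.
case: HI => I0 ID IZ Io IM.
have Iaa : I (babs a).
  apply: (Io _ a) => //; exact: abs_le_of_ge0 (abs_ge0 a).
have Ip : I (bla_mul (bla_mul r (babs a)) r').
  by have [h1 _] := IM r _ Iaa; have [_ h2] := IM r' _ h1.
apply: (Io x _ _ Ip).
apply: (bla_le_trans hx); exact: (abs_ge_x (bla_mul (bla_mul r (babs a)) r')).
Qed.
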